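(* In the setting below, let $(\psi_m,\Theta_m)_{m\in\mathbb{N}}$ be an ISIMIN and let $X^x_m$ be the nearest neighbor of $x$ according to $(\psi_m,\Theta_m)$. If $r>0$ satisfies $\mathbb{P}_X(S_r)>0$, then for every $m\in\mathbb{N}$ and every Borel set $A\subseteq\mathcal{X}$, $$\mathbb{P}(X^x_m\in A\mid X^x_m\in S_r)=\mathbb{P}(X\in A\mid X\in S_r).$$ In particular, condition (B) holds: there exist $C>0$, $R>0$, $M\in\mathbb{N}$ such that for all $r\in(0,R)$ and integers $m\ge M$ with $\mathbb{P}_X(S_r)>0$, $\mathbb{E}[|\eta(X^x_m)-\eta(x)|\mid X^x_m\in S_r]\le C\,\mathbb{E}[|\eta(X)-\eta(x)|\mid X\in S_r]$ (indeed with $C=1$ and equality).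
   Context: Let $(\mathcal{X},d)$ be a metric space with its Borel $\sigma$-algebra, let $(\Omega,\mathcal{F},\mathbb{P})$ be a probability space, and let $X,X_1,X_2,\dots$ be i.i.d. $\mathcal{X}$-valued random variables with common law $\mathbb{P}_X$. For $x\in\mathcal{X}$ and $r>0$ write $S_r=\{x':d(x,x')=r\}$. Fix $x\in\mathcal{X}$ and a bounded measurable $\eta:\mathcal{X}\to\mathbb{R}$. An ISIMIN (Independent Selector of Indices of Minimum Numbers) is a sequence $(\psi_m,\Theta_m)_{m\in\mathbb{N}}$ such that for each $m$ there is a measurable space $(\mathcal{Z}_m,\mathcal{G}_m)$, $\Theta_m:\Omega\to\mathcal{Z}_m$ is a random variable independent of $(X_1,\dots,X_m)$, and $\psi_m:[0,\infty)^m\times\mathcal{Z}_m\to\{1,\dots,m\}$ is measurable with $\psi_m(r_1,\dots,r_m,z)\in\arg\min_{k\in\{1,\dots,m\}}r_k$ for all $r_1,\dots,r_m\ge0$, $z\in\mathcal{Z}_m$. The nearest neighbor of $x$ according to $(\psi_m,\Theta_m)$ is $X^x_m:=X_{\psi_m(d(x,X_1),\dots,d(x,X_m),\Theta_m)}$. Conditional probability given an event $E$ of positive probability means $\mathbb{P}(\cdot\cap E)/\mathbb{P}(E)$. *)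

(* Defs.v *)
From HB Require Import structures.
From mathcomp Require Import all_boot all_order all_algebra.
From mathcomp Require Import all_classical all_reals all_analysis.
Set Implicit Arguments. Unset Strict Implicit. Unset Printing Implicit Defensive.
Import Order.TTheory GRing.Theory Num.Theory.
Local Open Scope classical_set_scope.
Local Open Scope ring_scope.

Definition is_metric {R : realType} {T : Type} (dist : T -> T -> R) : Prop :=
  [/\ forall x y, 0 <= dist x y,
      forall x y, dist x y = 0 <-> x = y,
      forall x y, dist x y = dist y x &
      forall x y z, dist x z <= dist x y + dist y z].

Definition dopen {R : realType} {T : Type} (dist : T -> T -> R) (U : set T) : Prop :=
  forall y, U y -> exists2 e : R, 0 < e & [set z | dist y z < e] `<=` U.

Definition borel_of_metric {R : realType} {dT} (T : measurableType dT)
  (dist : T -> T -> R) : Prop :=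
  (@measurable _ T) = <<s [set U | dopen dist U] >>.

Definition sphere {R : realType} {T : Type} (dist : T -> T -> R) (x : T) (r : R)
  : set T := [set y | dist x y = r].

Definition condprob {R : realType} {dO} {O : measurableType dO}
  (P : probability O R) (A E : set O) : R :=
  fine (P (A `&` E)) / fine (P E).

Definition condexp {R : realType} {dO} {O : measurableType dO}
  (P : probability O R) (Y : O -> R) (E : set O) : R :=
  fine (\int[P]_(w in E) (Y w)%:E)%E / fine (P E).

Definition mutually_independent {R : realType} {dO} {O : measurableType dO}
  {dT} {T : measurableType dT} (P : probability O R) (Xs : nat -> O -> T) : Prop :=
  forall (n : nat) (A : nat -> set T), (forall i, measurable (A i)) ->
    fine (P (\bigcap_(i in `I_n) (Xs i @^-1` A i))) =
    \prod_(i < n) fine (P (Xs i @^-1` A i)).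

Definition identically_distributed {R : realType} {dO} {O : measurableType dO}
  {dT} {T : measurableType dT} (P : probability O R) (Xs : nat -> O -> T) : Prop :=
  forall i (A : set T), measurable A -> P (Xs i @^-1` A) = P (Xs 0%N @^-1` A).

(* Theta is independent of the random vector (Y 0, ..., Y (n-1)), via the
   generating pi-system of cylinder sets. *)
Definition indep_of_vector {R : realType} {dO} {O : measurableType dO}
  {dT} {T : measurableType dT} {dZ} {Z : measurableType dZ}
  (P : probability O R) (Theta : O -> Z) (n : nat) (Y : nat -> O -> T) : Prop :=
  forall (B : set Z) (A : nat -> set T), measurable B ->
    (forall i, measurable (A i)) ->
    fine (P (Theta @^-1` B `&` \bigcap_(i in `I_n) (Y i @^-1` A i))) =
    fine (P (Theta @^-1` B)) * fine (P (\bigcap_(i in `I_n) (Y i @^-1` A i))).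

(* The samples are Xs 1, Xs 2, ...; (Xs 0) plays the role of X.
   For the m-th selector we use n = m.+1 samples X_1..X_{m+1} (so that the
   index set {1,...,n} is nonempty); its indices are 'I_m.+1, where index i
   stands for sample X_{i+1}. *)
Definition is_ISIMIN {R : realType} {dO} {O : measurableType dO}
  {dT} {T : measurableType dT} (P : probability O R) (Xs : nat -> O -> T)
  (dZ : nat -> measure_display) (Z : forall m, measurableType (dZ m))
  (Theta : forall m, O -> Z m)
  (psi : forall m, (m.+1.-tuple (measurableTypeR R) * Z m)%type -> 'I_m.+1) : Prop :=
  forall m,
  [/\ measurable_fun setT (Theta m),
      indep_of_vector P (Theta m) m.+1 (fun i => Xs i.+1),
      (forall k : 'I_m.+1,
         measurable ([set rz | forall i, 0 <= tnth rz.1 i] `&`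
                     (psi m) @^-1` [set k])) &
      (forall (r : m.+1.-tuple (measurableTypeR R)) (z : Z m),
         (forall i, 0 <= tnth r i) ->
         forall j, tnth r (psi m (r, z)) <= tnth r j)].

Definition nearest_neighbor {R : realType} {dO} {O : measurableType dO}
  {T : Type} (dist : T -> T -> R) (x : T) (Xs : nat -> O -> T)
  (dZ : nat -> measure_display) (Z : forall m, measurableType (dZ m))
  (Theta : forall m, O -> Z m)
  (psi : forall m, (m.+1.-tuple (measurableTypeR R) * Z m)%type -> 'I_m.+1)
  (m : nat) : O -> T :=
  fun w => Xs (val (psi m ([tuple (dist x (Xs (val i).+1 w) : measurableTypeR R)
                            | i < m.+1], Theta m w))).+1 w.

(* Main.v *)
Require Import Defs.
From HB Require Import structures.
From mathcomp Require Import all_boot all_order all_algebra.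
From mathcomp Require Import all_classical all_reals all_analysis.
From mathcomp Require Import ring lra measurable_realfun.
Import Order.TTheory GRing.Theory Num.Theory.
Local Open Scope classical_set_scope.
Local Open Scope ring_scope.

Section dmeas.
Context (R : realType) (dT : measure_display) (T : measurableType dT)
  (dist : T -> T -> R) (hmet : is_metric dist) (hbor : borel_of_metric dist) (x : T).

Lemma dist_measurable : measurable_fun setT (dist x : T -> measurableTypeR R).
Proof.
apply: (measurability _ (measurable_realfun.RGenInftyO.measurableE R)) => /= _ [_ [a ->] <-].
rewrite setTI hbor; apply: sub_sigma_algebra => y /=.
rewrite in_itv /= => ya; exists (a - dist x y); first by rewrite subr_gt0.
move=> z /= hz; rewrite in_itv /=.
case: hmet => _ _ _ tri.
have := tri x y z; lra.
Qed.
End dmeas.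

Section core.
Context (R : realType) (dT : measure_display) (T : measurableType dT)
  (dO : measure_display) (O : measurableType dO)
  (P : probability O R) (Xs : nat -> O -> T)
  (mXs : forall i, measurable_fun setT (Xs i))
  (hind : mutually_independent P Xs).

Lemma finP {A : set O} : measurable A -> P A = (fine (P A))%:E.
Proof. by move=> mA; rewrite fineK// fin_num_measure. Qed.

Lemma mpre i {A : set T} : measurable A -> measurable (Xs i @^-1` A).
Proof. by move=> mA; have := mXs i measurableT _ mA; rewrite setTI. Qed.

Lemma prod_form n (A : nat -> set T) : (forall i, measurable (A i)) ->
  fine (P (\bigcap_(i in `I_n) (Xs i.+1 @^-1` A i))) =
  \prod_(i < n) fine (P (Xs i.+1 @^-1` A i)).
Proof.
move=> mA.
pose A' i := if i is j.+1 then A j else setT.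
have mA' : forall i, measurable (A' i) by move=> [|j] /=; [exact: measurableT|exact: mA].
have := hind n.+1 A' mA'.
have -> : \bigcap_(i in `I_n.+1) (Xs i @^-1` A' i) =
          \bigcap_(i in `I_n) (Xs i.+1 @^-1` A i).
  apply/seteqP; split=> w /= hw.
    by move=> i /= ilt; exact: (hw i.+1).
  by case=> [|i] //= ilt; exact: hw.
move=> ->; rewrite big_ord_recl /= probability_setT /= mul1r.
by [].
Qed.


Section indep.
Context (dZ : measure_display) (Z : measurableType dZ) (Th : O -> Z)
  (n : nat) (mTh : measurable_fun setT Th)
  (hTh : indep_of_vector P Th n (fun i => Xs i.+1))
  (k : nat) (kn : (k < n)%N) (B : set T) (mB : measurable B).

Let E := Xs k.+1 @^-1` B.

Definition Hfam := [set G : set O | exists C (A : nat -> set T),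
  [/\ measurable C, forall i, measurable (A i), A k = setT &
      G = Th @^-1` C `&` \bigcap_(i in `I_n) (Xs i.+1 @^-1` A i)]].

Lemma mTh_pre {C : set Z} : measurable C -> measurable (Th @^-1` C).
Proof. by move=> mC; have := mTh measurableT _ mC; rewrite setTI. Qed.

Lemma mbigcap {A : nat -> set T} : (forall i, measurable (A i)) ->
  measurable (\bigcap_(i in `I_n) (Xs i.+1 @^-1` A i)).
Proof.
move=> mA; apply: fin_bigcap_measurable; first exact: finite_II.
by move=> i _; exact: mpre.
Qed.

Lemma Hfam_meas G : Hfam G -> measurable G.
Proof.
by case=> C [A [mC mA _ ->]]; apply: measurableI; [exact: mTh_pre|exact: mbigcap].
Qed.

Lemma Hfam_indep G : Hfam G -> (P (E `&` G) = P E * P G)%E.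
Proof.
case=> C [A [mC mA Ak ->]].
pose A' i := if i == k then B else A i.
have mA' : forall i, measurable (A' i) by move=> i; rewrite /A'; case: ifP.
have eq1 : E `&` (Th @^-1` C `&` \bigcap_(i in `I_n) (Xs i.+1 @^-1` A i)) =
   Th @^-1` C `&` \bigcap_(i in `I_n) (Xs i.+1 @^-1` A' i).
  apply/seteqP; split=> w /=.
    move=> [Ew [Cw hA]]; split=> // i /= ilt; rewrite /A'.
    by case: eqP => [->|_]; [exact: Ew|exact: hA].
  move=> [Cw hA']; split; first by have := hA' k kn; rewrite /A' eqxx.
  split=> // i /= ilt; have := hA' i ilt; rewrite /A'.
  by case: eqP => [->|//]; rewrite Ak.
rewrite eq1.
rewrite (finP (measurableI _ _ (mTh_pre mC) (mbigcap mA'))).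
rewrite (finP (mpre _ mB)).
rewrite (finP (measurableI _ _ (mTh_pre mC) (mbigcap mA))) -EFinM; congr EFin.
rewrite (hTh C A' mC mA') (hTh C A mC mA) !prod_form //.
rewrite (bigD1 (Ordinal kn)) // [X in _ = _ * (_ * X)](bigD1 (Ordinal kn)) //=.
have -> : \prod_(i < n | i != Ordinal kn) fine (P (Xs i.+1 @^-1` A' i)) =
          \prod_(i < n | i != Ordinal kn) fine (P (Xs i.+1 @^-1` A i)).
  apply: eq_bigr => i ik; rewrite /A' ifF //.
  by apply/negbTE; move: ik; apply: contra => /eqP ik; apply/eqP/val_inj.
rewrite /A' eqxx Ak preimage_setT probability_setT /=.
by rewrite mul1r mulrCA.
Qed.


Let mE : measurable E. Proof. exact: mpre. Qed.

Definition Lfam := [set G : set O | measurable G /\ P (E `&` G) = (P E * P G)%E].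

Lemma Lfam_dynkin : dynkin Lfam.
Proof.
split.
- by split; [exact: measurableT|rewrite setIT probability_setT mule1].
- move=> G [mG hG]; split; first exact: measurableC.
  rewrite -setDE measureD //; last first.
    by apply: (le_lt_trans (probability_le1 _ mE)); exact: ltry.
  transitivity (P E - P E * P G)%E; first by congr (_ - _)%E; exact: hG.
  rewrite probability_setC // (finP mE) (finP mG).
  by rewrite -EFinM -EFinB -EFinB -EFinM; congr EFin; ring.
- move=> F tF hF; split.
    by apply: bigcupT_measurable => i; exact: (hF i).1.
  rewrite setI_bigcupr measure_semi_bigcup //; last 3 first.
  + by move=> i; apply: measurableI => //; exact: (hF i).1.
  + exact: trivIset_setIl.
  + by apply: bigcupT_measurable => i; apply: measurableI => //; exact: (hF i).1.
  rewrite (@measure_semi_bigcup _ _ _ P F) //; last 2 first.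
  + by move=> i; exact: (hF i).1.
  + by apply: bigcupT_measurable => i; exact: (hF i).1.
  have -> : (\sum_(i <oo) P (E `&` F i) = \sum_(i <oo) ((fine (P E))%:E * P (F i)))%E.
    by apply: eq_eseriesr => i _; rewrite (hF i).2 -finP.
  by rewrite nneseriesZl // -finP.
Qed.

Lemma Hfam_setI : setI_closed Hfam.
Proof.
move=> G1 G2 [C1 [A1 [mC1 mA1 A1k ->]]] [C2 [A2 [mC2 mA2 A2k ->]]].
exists (C1 `&` C2), (fun i => A1 i `&` A2 i); split.
- exact: measurableI.
- by move=> i; exact: measurableI.
- by rewrite A1k A2k setIT.
apply/seteqP; split=> w /=.
  by move=> [[c1 a1] [c2 a2]]; split=> // i ilt; split; [exact: a1|exact: a2].
by move=> [[c1 c2] a]; split; split=> // i ilt; have [] := a i ilt.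
Qed.

Lemma sigma_Hfam_indep G : <<s Hfam >> G -> measurable G /\ P (E `&` G) = (P E * P G)%E.
Proof.
move=> hG.
have : <<s Hfam >> `<=` Lfam.
  apply: lambda_system_subset.
  - exact: Hfam_setI.
  - exact/dynkin_lambda_system/Lfam_dynkin.
  - by move=> H hH; split; [exact: Hfam_meas|exact: Hfam_indep].
  - by [].
by move/(_ G hG).
Qed.

End indep.

Section sel.
Context (dZ : measure_display) (Z : measurableType dZ) (Th : O -> Z) (m : nat)
  (mTh : measurable_fun setT Th)
  (psi : (m.+1.-tuple (measurableTypeR R) * Z)%type -> 'I_m.+1)
  (mpsi : forall k, measurable ([set rz | forall i, 0 <= tnth rz.1 i] `&` psi @^-1` [set k]))
  (dist : T -> T -> R) (hmet : is_metric dist) (hbor : borel_of_metric dist)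
  (x : T) (r : R) (r0 : 0 <= r).

Definition Dr (k : 'I_m.+1) (w : O) : m.+1.-tuple (measurableTypeR R) :=
  [tuple (if i == k then r else dist x (Xs (val i).+1 w) : measurableTypeR R) | i < m.+1].

Definition Gk k := [set w | psi (Dr k w, Th w) = k].

Lemma Gk_sigma (k : 'I_m.+1) : <<s @Hfam _ Z Th m.+1 (val k) >> (Gk k).
Proof.
pose O' := g_sigma_algebraType (@Hfam _ Z Th m.+1 (val k)).
have mF : measurable_fun (setT : set O') (fun w : O' => (Dr k w, Th w)).
  apply: measurable_fun_pair.
  - apply/measurable_fun_tnthP => i.
    case: (eqVneq i k) => [->|ik].
      rewrite (_ : _ \o _ = cst r); first exact: measurable_cst.
      by apply: funext => w; rewrite /= tnth_mktuple eqxx.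
    rewrite (_ : _ \o _ = (fun w => dist x (Xs (val i).+1 w))); last first.
      by apply: funext => w; rewrite /= tnth_mktuple (negbTE ik).
    move=> _ U mU; rewrite setTI; apply: sub_sigma_algebra.
    exists setT, (fun j => if j == val i then dist x @^-1` U else setT); split.
    + exact: measurableT.
    + move=> j; case: ifP => _ //.
      by have := @dist_measurable _ _ _ _ hmet hbor x measurableT _ mU; rewrite setTI.
    + rewrite ifF //; apply/negbTE; move: ik; apply: contra => /eqP ik.
      by apply/eqP/val_inj.
    + apply/seteqP; split=> w /=.
        move=> hw; split=> // j /= jlt; case: eqP => [->|//]; exact: hw.
      by move=> [_ /(_ (val i) (ltn_ord i))]; rewrite eqxx.
  - move=> _ C mC; rewrite setTI; apply: sub_sigma_algebra.
    exists C, (fun _ => setT); split => //.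
    by apply/seteqP; split=> w /=; [move=> c; split|case].
have := mF measurableT _ (mpsi k).
rewrite setTI.
have -> : (fun w : O' => (Dr k w, Th w)) @^-1`
    ([set rz | forall i, 0 <= tnth rz.1 i] `&` psi @^-1` [set k]) = Gk k.
  apply/seteqP; split=> w /=; first by case.
  move=> hw; split=> // i; rewrite tnth_mktuple; case: ifP => // _.
  by case: hmet.
by [].
Qed.


Definition Dt (w : O) : m.+1.-tuple (measurableTypeR R) :=
  [tuple (dist x (Xs (val i).+1 w) : measurableTypeR R) | i < m.+1].

Definition NN (w : O) : T := Xs (val (psi (Dt w, Th w))).+1 w.

Definition Kk (k : 'I_m.+1) := [set w | psi (Dt w, Th w) = k].

Lemma Kk_meas k : measurable (Kk k).
Proof.
have mF : measurable_fun setT (fun w => (Dt w, Th w)).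
  apply: measurable_fun_pair => //.
  apply/measurable_fun_tnthP => i.
  rewrite (_ : _ \o _ = (fun w => dist x (Xs (val i).+1 w))); last first.
    by apply: funext => w; rewrite /= tnth_mktuple.
  apply: measurableT_comp; last exact: mXs.
  exact: (@dist_measurable _ _ _ _ hmet hbor x).
have := mF measurableT _ (mpsi k); rewrite setTI.
have -> : (fun w => (Dt w, Th w)) @^-1`
    ([set rz | forall i, 0 <= tnth rz.1 i] `&` psi @^-1` [set k]) = Kk k.
  apply/seteqP; split=> w /=; first by case.
  move=> hw; split=> // i; rewrite tnth_mktuple.
  by case: hmet.
by [].
Qed.

Lemma NN_part (B : set T) : NN @^-1` B =
  \big[setU/set0]_(k < m.+1) (Xs (val k).+1 @^-1` B `&` Kk k).
Proof.
rewrite -bigcup_mkord_ord; apply/seteqP; split=> w /=.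
  move=> hw; exists (val (psi (Dt w, Th w))) => //=.
  by rewrite inord_val.
by move=> [i _ [hB hK]]; rewrite /NN hK.
Qed.

Lemma NN_meas (B : set T) : measurable B -> measurable (NN @^-1` B).
Proof.
move=> mB; rewrite NN_part; apply: bigsetU_measurable => k _.
by apply: measurableI; [exact: mpre|exact: Kk_meas].
Qed.


Lemma Dr_Dt (k : 'I_m.+1) (w : O) : dist x (Xs (val k).+1 w) = r -> Dr k w = Dt w.
Proof.
move=> h; apply: eq_from_tnth => i; rewrite !tnth_mktuple.
by case: eqP => [->|//]; rewrite h.
Qed.

Lemma decomp (hTh : indep_of_vector P Th m.+1 (fun i => Xs i.+1))
  (hid : identically_distributed P Xs) (B : set T) (mB : measurable B)
  (BS : B `<=` sphere dist x r) :
  P (NN @^-1` B) = (P (Xs 0 @^-1` B) * \sum_(k < m.+1) P (Gk k))%E.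
Proof.
rewrite NN_part (measure_bigsetU_ord P xpredT); last 2 first.
- by move=> k; apply: measurableI; [exact: mpre|exact: Kk_meas].
- apply/trivIsetP => i j _ _ ij; rewrite -subset0 => w [[_ hi] [_ hj]].
  by move/negP: ij; apply; rewrite -hi -hj.
rewrite ge0_sume_distrr //; apply: eq_bigr => k _.
have eqK : Xs (val k).+1 @^-1` B `&` Kk k = Xs (val k).+1 @^-1` B `&` Gk k.
  apply/seteqP; split=> w /= [hB hK]; split=> //.
    by change (psi (Dr k w, Th w) = k); rewrite Dr_Dt //; exact: BS.
  by change (psi (Dt w, Th w) = k); rewrite -(Dr_Dt k w) //; exact: BS.
rewrite eqK; transitivity (P (Xs (val k).+1 @^-1` B) * P (Gk k))%E.
  exact: (@sigma_Hfam_indep _ Z Th m.+1 mTh hTh (val k) (ltn_ord k) B mB (Gk k) (Gk_sigma k)).2.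
by rewrite hid.
Qed.


Lemma mS : measurable (sphere dist x r).
Proof.
have := @dist_measurable _ _ _ _ hmet hbor x measurableT _ (measurable_set1 r).
by rewrite setTI.
Qed.

Section withind.
Hypotheses (hTh : indep_of_vector P Th m.+1 (fun i => Xs i.+1))
  (hid : identically_distributed P Xs).

Lemma Gk_meas k : measurable (Gk k).
Proof.
exact: (@sigma_Hfam_indep _ Z Th m.+1 mTh hTh (val k) (ltn_ord k) setT
   measurableT (Gk k) (Gk_sigma k)).1.
Qed.

Definition qq := \sum_(k < m.+1) fine (P (Gk k)).

Lemma qq_ge0 : 0 <= qq.
Proof. by apply: sumr_ge0 => k _; apply: fine_ge0; exact: measure_ge0. Qed.

Lemma decompR {B : set T} (mB : measurable B) (BS : B `<=` sphere dist x r) :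
  P (NN @^-1` B) = (fine (P (Xs 0 @^-1` B)) * qq)%:E.
Proof.
rewrite (decomp hTh hid _ mB BS).
have -> : (\sum_(k < m.+1) P (Gk k))%E = qq%:E.
  rewrite /qq -sumEFin; apply: eq_bigr => k _; exact: finP (Gk_meas k).
by rewrite (finP (mpre _ mB)) -EFinM.
Qed.

Lemma lb : (((fine (P (Xs 0 @^-1` sphere dist x r))) ^+ m.+1)%:E
   <= P (NN @^-1` sphere dist x r))%E.
Proof.
have sub : \bigcap_(i in `I_m.+1) (Xs i.+1 @^-1` sphere dist x r) `<=`
           NN @^-1` sphere dist x r.
  by move=> w hw; exact: (hw _ (ltn_ord (psi (Dt w, Th w)))).
have mI : measurable (\bigcap_(i in `I_m.+1) (Xs i.+1 @^-1` sphere dist x r)).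
  apply: fin_bigcap_measurable; first exact: finite_II.
  by move=> i _; exact: mpre mS.
have h1 : (P (\bigcap_(i in `I_m.+1) (Xs i.+1 @^-1` sphere dist x r)) <=
    P (NN @^-1` sphere dist x r))%E.
  by apply: le_measure => //; rewrite inE //; exact: NN_meas mS.
apply: le_trans h1.
rewrite (finP mI) lee_fin (prod_form m.+1 (fun=> sphere dist x r) (fun=> mS)).
rewrite (eq_bigr (fun=> fine (P (Xs 0 @^-1` sphere dist x r)))); last first.
  by move=> i _; congr fine; exact: (hid _ _ mS).
by rewrite prodr_const card_ord.
Qed.

Lemma qq_gt0 : (0 < P (Xs 0 @^-1` sphere dist x r))%E -> 0 < qq.
Proof.
move=> hs.
have fs : 0 < fine (P (Xs 0 @^-1` sphere dist x r)).
  by move: hs; rewrite (finP (mpre _ mS)) lte_fin.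
have := lb; rewrite (decompR mS (@subset_refl _ _)) lee_fin.
rewrite lt_def qq_ge0 andbT; apply: contraTneq => ->.
by rewrite mulr0 -ltNge exprn_gt0.
Qed.

Lemma part1 (hs : (0 < P (Xs 0 @^-1` sphere dist x r))%E) (A : set T) :
  measurable A ->
  condprob P (NN @^-1` A) (NN @^-1` sphere dist x r) =
  condprob P (Xs 0 @^-1` A) (Xs 0 @^-1` sphere dist x r).
Proof.
move=> mA; rewrite /condprob -!preimage_setI.
rewrite (decompR (measurableI _ _ mA mS) (@subIsetr _ _ _)).
rewrite (decompR mS (@subset_refl _ _)) /=.
have q0 : qq != 0 by rewrite gt_eqF // qq_gt0.
by rewrite invfM mulrACA divff // mulr1.
Qed.


Lemma NN_mfun : measurable_fun setT NN.
Proof. by move=> _ B mB; rewrite setTI; exact: NN_meas. Qed.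

Lemma part2 (hs : (0 < P (Xs 0 @^-1` sphere dist x r))%E) (eta : T -> R)
  (meta : measurable_fun setT (eta : T -> measurableTypeR R)) :
  condexp P (fun w => `|eta (NN w) - eta x|) (NN @^-1` sphere dist x r) =
  condexp P (fun w => `|eta (Xs 0 w) - eta x|) (Xs 0 @^-1` sphere dist x r).
Proof.
pose g : T -> R := fun y => `|eta y - eta x|.
have mg : measurable_fun setT (fun y => (g y)%:E).
  apply/measurable_realfun.measurable_EFinP.
  apply: measurableT_comp; first exact: normr_measurable.
  apply: measurable_funB => //; exact: measurable_cst.
have g0 : forall y, (0 <= (g y)%:E)%E by move=> y; rewrite lee_fin; exact: normr_ge0.
pose XN : {mfun O >-> T} := HB.pack NN (isMeasurableFun.Build _ _ _ _ _ NN_mfun).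
pose X0 : {mfun O >-> T} := HB.pack (Xs 0) (isMeasurableFun.Build _ _ _ _ _ (mXs 0)).
pose qn : {nonneg R} := NngNum qq_ge0.
have IN : (\int[P]_(w in NN @^-1` sphere dist x r) (g (NN w))%:E =
    qq%:E * \int[P]_(w in Xs 0 @^-1` sphere dist x r) (g (Xs 0 w))%:E)%E.
  transitivity (\int[distribution P XN]_(y in sphere dist x r) (g y)%:E)%E.
    symmetry. have := ge0_integral_pushforward NN_mfun P mS (measurable_funTS mg) (fun y _ => g0 y). move=> h. exact: h.
  transitivity (\int[mscale qn (distribution P X0)]_(y in sphere dist x r) (g y)%:E)%E.
    apply: eq_measure_integral => B mB BS.
    transitivity (P (NN @^-1` B)); first by [].
    rewrite (decompR mB BS) /mscale /= EFinM muleC.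
    by rewrite -(finP (mpre _ mB)).
  rewrite (ge0_integral_mscale _ mS) //; last exact: measurable_funTS mg.
  congr (_ * _)%E.
  exact: (ge0_integral_pushforward (mXs 0) P mS (measurable_funTS mg)).
rewrite /condexp /=.
rewrite [X in fine X / _](_ : _ =
  (qq%:E * \int[P]_(w in Xs 0 @^-1` sphere dist x r) (g (Xs 0 w))%:E)%E);
  last exact: IN.
rewrite (decompR mS (@subset_refl _ _)) /=.
have q0 : 0 < qq by exact: qq_gt0.
have -> : (\int[P]_(w in Xs 0 @^-1` sphere dist x r) `|eta (Xs 0 w) - eta x|%:E =
  \int[P]_(w in Xs 0 @^-1` sphere dist x r) (g (Xs 0 w))%:E)%E by [].
case: (\int[P]_(w in Xs 0 @^-1` sphere dist x r) (g (Xs 0 w))%:E)%E => [v||] /=.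
- by rewrite [qq * v]mulrC invfM mulrACA divff ?gt_eqF // mulr1.
- by rewrite mulry gtr0_sg // mul1e /= !mul0r.
- by rewrite mulrNy gtr0_sg // mul1e /= !mul0r.
Qed.

End withind.

End sel.
End core.

Theorem mainTheorem11 (R : realType) (dT : measure_display) (T : measurableType dT)
  (dist : T -> T -> R) (dO : measure_display) (O : measurableType dO)
  (P : probability O R) (Xs : nat -> O -> T)
  (dZ : nat -> measure_display) (Z : forall m, measurableType (dZ m))
  (Theta : forall m, O -> Z m)
  (psi : forall m, (m.+1.-tuple (measurableTypeR R) * Z m)%type -> 'I_m.+1)
  (x : T) (eta : T -> R) :
  is_metric dist ->
  borel_of_metric dist ->
  (forall i, measurable_fun setT (Xs i)) ->
  mutually_independent P Xs ->
  identically_distributed P Xs ->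
  measurable_fun setT (eta : T -> measurableTypeR R) ->
  (exists K : R, forall y, `|eta y| <= K) ->
  is_ISIMIN P Xs Theta psi ->
  (forall r : R, 0 < r -> (0 < P (Xs 0%N @^-1` sphere dist x r))%E ->
     forall (m : nat) (A : set T), measurable A ->
       condprob P (nearest_neighbor dist x Xs Theta psi m @^-1` A)
                  (nearest_neighbor dist x Xs Theta psi m @^-1` sphere dist x r)
       = condprob P (Xs 0%N @^-1` A) (Xs 0%N @^-1` sphere dist x r))
  /\
  (exists C : R, 0 < C /\ exists Rad : R, 0 < Rad /\ exists M : nat,
     forall (r : R) (m : nat), 0 < r -> r < Rad -> (M <= m)%N ->
       (0 < P (Xs 0%N @^-1` sphere dist x r))%E ->
       condexp P (fun w => `|eta (nearest_neighbor dist x Xs Theta psi m w) - eta x|)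
                 (nearest_neighbor dist x Xs Theta psi m @^-1` sphere dist x r)
       <= C * condexp P (fun w => `|eta (Xs 0%N w) - eta x|)
                        (Xs 0%N @^-1` sphere dist x r)).
Proof.
move=> hmet hbor mXs hind hid meta _ hisi.
split.
- move=> r r0 hs m A mA.
  case: (hisi m) => mTh hTh mpsi _.
  exact: (@part1 _ _ _ _ _ P Xs mXs hind _ _ (Theta m) m mTh (psi m) mpsi dist
    hmet hbor x r (ltW r0) hTh hid hs A mA).
- exists 1; split => //; exists 1; split => //; exists 0%N.
  move=> r m r0 _ _ hs; case: (hisi m) => mTh hTh mpsi _.
  rewrite mul1r (_ : condexp _ _ _ = condexp P (fun w => `|eta (Xs 0%N w) - eta x|)
                        (Xs 0%N @^-1` sphere dist x r)) //.
  exact: (@part2 _ _ _ _ _ P Xs mXs hind _ _ (Theta m) m mTh (psi m) mpsi dist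
    hmet hbor x r (ltW r0) hTh hid hs eta meta).
Qed.
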